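(* Let $\{X_n\}$ be the Bessel-like walk of the context, $f_m=P_0(\tau_0=m)$ for $m\ge1$, and for even $0<m<n$ let $A_{m,n}=\frac{2}{n-m+2}\sum_{j=m}^nf_j$. Then for all even integers $0<k<m$, \[ f_m\le\frac{f_{m+k}+f_{m-k}}{2}\qquad\text{and}\qquad f_m\le A_{m-k,m+k}. \]
   Context: Let $\{X_n\}_{n\ge0}$ be a Markov chain on $\mathbb{Z}_+=\{0,1,2,\dots\}$ with steps $\pm1$, reflecting at $0$ (i.e. $p(0,1)=1$), and for $x\ge1$ transition probabilities $p_x=p(x,x+1)$, $q_x=p(x,x-1)=1-p_x$, where $p_x=\frac12\left(1-\frac{\delta}{2x}+\frac{R_x}{2}\right)$ for a fixed $\delta\ge-1$ and $R_x=o(1/x)$, and $p_x,q_x\in[\epsilon,1-\epsilon]$ for some $\epsilon>0$ and all $x\ge1$. $P_0$ is the law of the chain started at $0$, and $\tau_0=\min\{n\ge1:X_n=0\}$ is the first return time to $0$. *)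

(* Defs.v *)
From HB Require Import structures.
From mathcomp Require Import all_boot all_order all_algebra.
From mathcomp Require Import all_classical all_reals all_analysis.
Set Implicit Arguments. Unset Strict Implicit. Unset Printing Implicit Defensive.
Import Order.TTheory GRing.Theory Num.Theory.
Local Open Scope ring_scope.

Definition bkernel (R : realType) (p : nat -> R) (x y : nat) : R :=
  if x == 0%N then (y == 1%N)%:R
  else if y == x.+1 then p x
  else if y == x.-1 then 1 - p x
  else 0.

(* f_m = P_0(tau_0 = m), tau_0 = min{n >= 1 : X_n = 0}, computed as the sum over
   all paths (w_0,...,w_m) with w_0 = 0, w_m = 0, w_i <> 0 for 0 < i < m, of the
   product of one-step transition probabilities.  Paths of m steps from 0 stay
   in {0,...,m}, so positions are taken in 'I_m.+1.  f_0 = 0 since tau_0 >= 1. *)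
Definition first_return (R : realType) (p : nat -> R) (m : nat) : R :=
  if m is 0%N then 0 else
  \sum_(w : {ffun 'I_m.+1 -> 'I_m.+1} |
          [&& w ord0 == ord0, w ord_max == ord0 &
              [forall i : 'I_m.+1, ((0 < i)%N && (i < m)%N) ==> (w i != ord0)]])
    \prod_(i < m) bkernel p (w (inord i)) (w (inord i.+1)).

Definition Aavg (R : realType) (f : nat -> R) (m n : nat) : R :=
  2 / ((n - m)%:R + 2) * \sum_(m <= j < n.+1) f j.

(* Main.v *)
Require Import Defs.
From HB Require Import structures.
From mathcomp Require Import all_boot all_order all_algebra.
From mathcomp Require Import all_classical all_reals all_analysis.
From mathcomp Require Import zify ring lra.
Import Order.TTheory GRing.Theory Num.Theory.
Set Implicit Arguments. Unset Strict Implicit. Unset Printing Implicit Defensive.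
Local Open Scope ring_scope.



Definition Psum (R : realType) (S : finType) (F : nat -> S -> S -> R) (a : S) (t : nat) (y : S) : R :=
 \sum_(w : {ffun 'I_t.+1 -> S} | (w ord0 == a) && (w ord_max == y))
    \prod_(i < t) F i (w (inord i)) (w (inord i.+1)).

Lemma sum_ffun1 (R : realType) (S : finType) (G : {ffun 'I_1 -> S} -> R) :
  \sum_(w : {ffun 'I_1 -> S}) G w = \sum_(x : S) G [ffun => x].
Proof.
rewrite (reindex (fun x : S => [ffun => x])) //.
exists (fun w : {ffun 'I_1 -> S} => w ord0) => [x _|w _]; first by rewrite ffunE.
by apply/ffunP => i; rewrite ffunE (ord1 i).
Qed.

Lemma Psum0 (R : realType) (S : finType) (F : nat -> S -> S -> R) a y :
  Psum F a 0 y = (a == y)%:R.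
Proof.
rewrite /Psum big_mkcond /= sum_ffun1 /=.
rewrite (eq_bigr (fun x => if x == a then (a == y)%:R else 0)); last first.
  move=> x _; rewrite !ffunE big_ord0.
  by case: eqP => [->|//]; case: (a == y).
by rewrite -big_mkcond big_pred1_eq.
Qed.

Definition fext (S : finType) t (u : {ffun 'I_t.+1 -> S}) (x : S) : {ffun 'I_t.+2 -> S} :=
  [ffun i : 'I_t.+2 => if (i < t.+1)%N then u (inord i) else x].

Lemma sum_ffunS (R : realType) (S : finType) t (G : {ffun 'I_t.+2 -> S} -> R) :
  \sum_(w : {ffun 'I_t.+2 -> S}) G w =
  \sum_(u : {ffun 'I_t.+1 -> S}) \sum_(x : S) G (fext u x).
Proof.
rewrite pair_big /=.
rewrite (reindex (fun p : {ffun 'I_t.+1 -> S} * S => fext p.1 p.2)) //.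
exists (fun w : {ffun 'I_t.+2 -> S} =>
   ([ffun i : 'I_t.+1 => w (inord i)], w ord_max)) => [[u x] _|w _] /=.
  congr pair; last by rewrite ffunE /= ltnn.
  apply/ffunP => i; rewrite !ffunE inordK; last by apply: (ltn_trans (ltn_ord i)).
  by rewrite ltn_ord; congr (u _); apply/val_inj; rewrite /= inordK.
apply/ffunP => i; rewrite !ffunE.
case: ifP => hi; first by congr (w _); apply/val_inj; rewrite /= !inordK // ltnS ltnW.
congr (w _); apply/val_inj => /=.
by have := ltn_ord i; rewrite ltnS leq_eqVlt hi orbF => /eqP.
Qed.

Lemma fext_lt (S : finType) t (u : {ffun 'I_t.+1 -> S}) x j :
  (j < t.+1)%N -> fext u x (inord j) = u (inord j).
Proof.
move=> hj; rewrite ffunE inordK; last by apply: ltnW.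
by rewrite hj; congr (u _); apply/val_inj; rewrite /= !inordK //; apply: ltnW.
Qed.

Lemma fext_max (S : finType) t (u : {ffun 'I_t.+1 -> S}) x :
  fext u x (inord t.+1) = x.
Proof. by rewrite ffunE inordK // ltnn. Qed.

Lemma PsumS (R : realType) (S : finType) (F : nat -> S -> S -> R) a t y :
  Psum F a t.+1 y = \sum_(x : S) Psum F a t x * F t x y.
Proof.
rewrite /Psum; symmetry.
under eq_bigr => x _ do rewrite big_distrl /= big_mkcond /=.
rewrite exchange_big /= [RHS]big_mkcond sum_ffunS /=.
apply: eq_bigr => u _; symmetry.
have e0 : forall x, fext u x ord0 = u ord0.
  by move=> x; rewrite ffunE /=; congr (u _); apply/val_inj; rewrite /= inordK.
have em : forall x, fext u x ord_max = x by move=> x; rewrite ffunE /= ltnn.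
rewrite (eq_bigr (fun x => if x == y then
    (if u ord0 == a then \prod_(i < t) F i (u (inord i)) (u (inord i.+1)) * F t (u ord_max) y else 0) else 0)
   (fun x _ => _)) /=; last first.
  move=> x _; rewrite e0 em.
  case: (x =P y) => [->|]; last by rewrite andbF.
  rewrite andbT; case: (u ord0 == a) => //.
  rewrite big_ord_recr /=; congr (_ * _).
    apply: eq_bigr => i _; rewrite !fext_lt //; have := ltn_ord i; lia.
  rewrite fext_max fext_lt //; congr (F _ (u _) _); apply/val_inj.
  by rewrite /= !inordK.
rewrite -big_mkcond big_pred1_eq.
rewrite (eq_bigr (fun x => if x == u ord_max then
   (if u ord0 == a then \prod_(i < t) F i (u (inord i)) (u (inord i.+1)) * F t (u ord_max) y else 0) else 0)); last first.
  move=> x _; rewrite (eq_sym x); case: (u ord_max =P x) => [->|_]; last by rewrite andbF.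
  by rewrite andbT; case: (u ord0 == a).
by rewrite -big_mkcond big_pred1_eq.
Qed.



Definition FF (R : realType) (p : nat -> R) (M : nat) (i : nat) (x y : 'I_M.+1) : R :=
  bkernel p x y * (((i.+1 < M)%N ==> (val y != 0%N)))%:R.

Arguments FF {R} p M i x y.

Lemma prod_ind (R : realType) M (w : {ffun 'I_M.+1 -> 'I_M.+1}) :
  \prod_(i < M) (((i.+1 < M)%N ==> (val (w (inord i.+1)) != 0%N)))%:R =
  ([forall i : 'I_M.+1, ((0 < i)%N && (i < M)%N) ==> (w i != ord0)])%:R :> R.
Proof.
case: (boolP [forall _, _]) => [/forallP H|/forallPn [i0]].
  apply: big1 => i _; have := H (inord i.+1); rewrite inordK; last first.
    by have := ltn_ord i; lia.
  case: (i.+1 < M)%N => //= h; have -> : (val (w (inord i.+1)) != 0%N) = true by exact: h.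
  by [].
rewrite negb_imply => /andP [/andP [h0 hM]] /negPn /eqP hw.
have hj : (i0.-1 < M)%N by lia.
rewrite (bigD1 (Ordinal hj)) //= prednK // hM /=.
have -> : (inord i0 : 'I_M.+1) = i0 by rewrite inord_val.
by rewrite hw eqxx mul0r.
Qed.

Lemma fr_Psum (R : realType) (p : nat -> R) M : (0 < M)%N ->
  first_return p M = Psum (FF p M) ord0 M ord0.
Proof.
case: M => // M _.
rewrite /first_return /Psum.
rewrite big_mkcond [RHS]big_mkcond; apply: eq_bigr => w _.
case: (w ord0 == ord0) => //=; case: (w ord_max == ord0) => //=.
rewrite /FF big_split /= prod_ind.
by case: [forall _, _]; rewrite ?mulr1 ?mulr0.
Qed.



Definition Kk (R : realType) (p : nat -> R) (x y : nat) : R :=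
  if (x == 0%N) || (y == 0%N) then 0 else bkernel p x y.

Fixpoint dd (R : realType) (p : nat -> R) (L t a y : nat) : R :=
  match t with
  | 0 => (a == y)%:R
  | t'.+1 => \sum_(x < L) dd p L t' a x * Kk p x y
  end.

Lemma bk_x0 (R : realType) (p : nat -> R) x :
  bkernel p x 0 = (x == 1%N)%:R * (1 - p 1%N).
Proof.
rewrite /bkernel; case: x => [|[|x]] //=; first by rewrite mul0r.
  by rewrite mul1r.
by rewrite mul0r.
Qed.

Lemma bk_0y (R : realType) (p : nat -> R) y : bkernel p 0 y = (y == 1%N)%:R.
Proof. by []. Qed.

Lemma dd_at0 (R : realType) (p : nat -> R) L t : dd p L t 1 0 = 0.
Proof.
case: t => [|t] //=; apply: big1 => x _; by rewrite /Kk orbT mulr0.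
Qed.

Lemma Psum_dd (R : realType) (p : nat -> R) M t (y : 'I_M.+1) :
  (t.+2 <= M)%N -> Psum (FF p M) ord0 t.+1 y = dd p M.+1 t 1 y.
Proof.
elim: t y => [|t IH] y ht.
  rewrite PsumS /=.
  rewrite (bigD1 ord0) //= Psum0 eqxx mul1r big1 => [|x /negPf hx]; last first.
    by rewrite Psum0 eq_sym hx mul0r.
  rewrite addr0 /FF bk_0y (_ : (1 < M)%N = true); last by lia.
  case: (y =P 1%N :> nat) => [h|h] /=; first by rewrite (_ : nat_of_ord y = 1%N) ?mul1r //; exact: h.
  by rewrite mul0r; have -> : (1%N == nat_of_ord y) = false by apply/eqP => e; apply: h.
rewrite PsumS /=; apply: eq_bigr => x _.
rewrite IH; last by lia.
rewrite /FF /Kk (_ : (t.+2 < M)%N = true) /=; last by lia.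
case: (boolP (val x == 0%N)) => [/eqP hx|hx].
  by rewrite hx dd_at0 !mul0r.
case: (boolP (val y == 0%N)) => hy /=; by rewrite ?mulr0 ?mulr1.
Qed.

Lemma fr_dd (R : realType) (p : nat -> R) M : (2 <= M)%N ->
  first_return p M = (1 - p 1%N) * dd p M.+1 (M - 2) 1 1.
Proof.
move=> hM; rewrite fr_Psum; last by lia.
have -> : M = (M - 2).+2 by lia.
rewrite PsumS.
rewrite (eq_bigr (fun x : 'I_(M-2).+3 => dd p (M - 2).+3 (M - 2) 1 x * ((x == 1%N :> nat)%:R * (1 - p 1%N)))); last first.
  move=> x _; rewrite Psum_dd; last by lia.
  by rewrite /FF /= ltnn /= mulr1 bk_x0.
have h1 : (1 < (M - 2).+3)%N by lia.
rewrite (bigD1 (Ordinal h1)) //= mul1r big1 ?addr0; first by rewrite !subSS subn0 mulrC.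
move=> x hx; rewrite (_ : (nat_of_ord x == 1%N) = false) ?mul0r ?mulr0 //.
by apply/negbTE; apply: contra hx => /eqP h; apply/eqP/val_inj.
Qed.



Lemma Kk_cases (R : realType) (p : nat -> R) x y :
  Kk p x y = if (x != 0%N) && (y == x.+1) then p x
             else if (y != 0%N) && (x == y.+1) then 1 - p x else 0.
Proof.
rewrite /Kk /bkernel; case: x => [|x]; case: y => [|y] //=.
do ![case: eqP => //= ?]; lia.
Qed.

Lemma sum_pick (R : realType) L (g : nat -> R) b : (b < L)%N ->
  \sum_(x < L) g x * (x == b :> nat)%:R = g b.
Proof.
move=> hb; rewrite (bigD1 (Ordinal hb)) //= eqxx mulr1 big1 ?addr0 //.
move=> x hx; rewrite (_ : (nat_of_ord x == b) = false) ?mulr0 //.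
by apply/negbTE; apply: contra hx => /eqP h; apply/eqP/val_inj.
Qed.

Lemma dd_CK (R : realType) (p : nat -> R) L s t a b : (b < L)%N ->
  dd p L (s + t) a b = \sum_(x < L) dd p L s a x * dd p L t x b.
Proof.
elim: t b => [|t IH] b hb.
  by rewrite addn0 /= sum_pick.
rewrite addnS /=.
under eq_bigr => y _ do rewrite IH // big_distrl /=.
rewrite exchange_big /=; apply: eq_bigr => x _.
rewrite big_distrr /=; apply: eq_bigr => y _; by rewrite mulrA.
Qed.

Lemma dd_comm (R : realType) (p : nat -> R) L t a b : (a < L)%N -> (b < L)%N ->
  dd p L t.+1 a b = \sum_(z < L) Kk p a z * dd p L t z b.
Proof.
move=> ha hb; rewrite -add1n dd_CK //; apply: eq_bigr => z _; congr (_ * _) => /=.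
under eq_bigr => x _ do rewrite eq_sym mulrC.
by rewrite (sum_pick (fun x => Kk p x z)).
Qed.

Fixpoint pi1 (R : realType) (p : nat -> R) (m : nat) : R :=
  match m with
  | 0 => 1
  | m'.+1 => pi1 p m' * p m'.+1 / (1 - p m'.+2)
  end.

Definition pi (R : realType) (p : nat -> R) (n : nat) : R :=
  match n with 0 => 1 | n'.+1 => pi1 p n' end.

Lemma pi_gt0 (R : realType) (p : nat -> R)
  (hp : forall x, (0 < x)%N -> 0 < p x) (hq : forall x, (0 < x)%N -> 0 < 1 - p x) n :
  0 < pi p n.
Proof.
case: n => [|n] //=; elim: n => [|n IH] //=.
by apply: divr_gt0; [apply: mulr_gt0 => //; apply: hp|apply: hq].
Qed.

Lemma detbal (R : realType) (p : nat -> R)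
  (hq : forall x, (0 < x)%N -> 0 < 1 - p x) x y :
  pi p x * Kk p x y = pi p y * Kk p y x.
Proof.
have key : forall z, (0 < z)%N -> pi p z * p z = pi p z.+1 * (1 - p z.+1).
  move=> [|z] // _ /=; rewrite -mulrA mulVf ?mulr1 //.
  by apply: lt0r_neq0; apply: hq.
rewrite !Kk_cases.
case: (boolP ((x != 0%N) && (y == x.+1))) => [/andP [hx /eqP ->]|h1].
  rewrite (_ : (x == x.+2) = false) ?andbF /=; [by apply: key; lia | by apply/eqP; lia].
case: (boolP ((y != 0%N) && (x == y.+1))) => [/andP [hy /eqP ->]|h2].
  by rewrite key //; lia.
by rewrite !mulr0.
Qed.

Lemma dd_rev (R : realType) (p : nat -> R)
  (hq : forall x, (0 < x)%N -> 0 < 1 - p x) L t a b : (a < L)%N -> (b < L)%N ->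
  pi p a * dd p L t a b = pi p b * dd p L t b a.
Proof.
elim: t a b => [|t IH] a b ha hb /=.
  case: (a =P b) => [->|ne]; first by rewrite eqxx.
  by rewrite eq_sym; move/eqP/negbTE: ne => ->; rewrite !mulr0.
transitivity (pi p b * dd p L t.+1 b a); last by []. rewrite (dd_comm _ _ hb ha) !big_distrr /=; apply: eq_bigr => z _.
have h := detbal hq z b. rewrite mulrA IH // [RHS]mulrA -h; ring.
Qed.

Lemma dd_quad (R : realType) (p : nat -> R)
  (hp : forall x, (0 < x)%N -> 0 < p x)
  (hq : forall x, (0 < x)%N -> 0 < 1 - p x) L s t : (1 < L)%N ->
  dd p L (s + t) 1 1 = \sum_(x < L) dd p L s 1 x * dd p L t 1 x / pi p x.
Proof.
move=> hL; rewrite dd_CK //; apply: eq_bigr => x _.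
rewrite -mulrA; congr (_ * _).
have hpx := pi_gt0 hp hq x.
apply: (mulfI (lt0r_neq0 hpx)); rewrite dd_rev //.
by rewrite mulrCA mulfV ?mulr1 ?(lt0r_neq0 hpx) //= mul1r.
Qed.

Lemma dd_conv (R : realType) (p : nat -> R)
  (hp : forall x, (0 < x)%N -> 0 < p x)
  (hq : forall x, (0 < x)%N -> 0 < 1 - p x) L N j : (1 < L)%N -> (j <= N)%N ->
  2 * dd p L (N + N) 1 1 <= dd p L ((N + j) + (N + j)) 1 1 + dd p L ((N - j) + (N - j)) 1 1.
Proof.
move=> hL hj.
have -> : (N + N = (N + j) + (N - j))%N by lia.
rewrite !dd_quad // -subr_ge0.
have -> : \sum_(x < L) dd p L (N + j) 1 x * dd p L (N + j) 1 x / pi p x +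
    \sum_(x < L) dd p L (N - j) 1 x * dd p L (N - j) 1 x / pi p x -
    2 * \sum_(x < L) dd p L (N + j) 1 x * dd p L (N - j) 1 x / pi p x =
    \sum_(x < L) (dd p L (N + j) 1 x - dd p L (N - j) 1 x) ^+ 2 / pi p x.
  rewrite mulr_sumr -big_split -sumrN -big_split /=; apply: eq_bigr => x _.
  rewrite /=; field.
  exact: lt0r_neq0 (pi_gt0 hp hq x).
apply: sumr_ge0 => x _; apply: divr_ge0; first exact: sqr_ge0.
exact: ltW (pi_gt0 hp hq x).
Qed.



Lemma Kk_far (R : realType) (p : nat -> R) x y :
  y != x.+1 -> x != y.+1 -> Kk p x y = 0.
Proof.
move=> h1 h2; rewrite Kk_cases (negbTE h1) (negbTE h2) !andbF //.
Qed.

Lemma dd_supp (R : realType) (p : nat -> R) L t y : (t.+2 <= y)%N -> dd p L t 1 y = 0.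
Proof.
elim: t y => [|t IH] y hy /=.
  by rewrite (_ : (1 == y) = false) //; apply/eqP; lia.
apply: big1 => x _.
case: (ltnP x t.+2) => hx; last by rewrite IH // mul0r.
rewrite Kk_far ?mulr0 //; apply/eqP; lia.
Qed.

Lemma sum_trunc (R : realType) (g : nat -> R) n L :
  (forall x, (n <= x)%N -> g x = 0) -> (n <= L)%N ->
  \sum_(x < L) g x = \sum_(x < n) g x.
Proof.
move=> hg hnL; rewrite (big_ord_widen L g hnL) [RHS]big_mkcond /=.
apply: eq_bigr => x _; case: ltnP => // h; by rewrite hg.
Qed.

Lemma dd_indep (R : realType) (p : nat -> R) L L' t y :
  (t < L)%N -> (t < L')%N -> dd p L t 1 y = dd p L' t 1 y.
Proof.
elim: t L L' y => [|t IH] L L' y h1 h2 //=.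
rewrite (@sum_trunc R (fun x => dd p L t 1 x * Kk p x y) t.+2 L) //; last first.
  by move=> x hx; rewrite dd_supp // mul0r.
rewrite (@sum_trunc R (fun x => dd p L' t 1 x * Kk p x y) t.+2 L') //; last first.
  by move=> x hx; rewrite dd_supp // mul0r.
apply: eq_bigr => x _; rewrite (IH L L') //; lia.
Qed.

Lemma dd_par (R : realType) (p : nat -> R) L t y : ~~ odd (t + y) -> dd p L t 1 y = 0.
Proof.
elim: t y => [|t IH] y hy /=.
  by rewrite (_ : (1 == y) = false) //; apply/eqP => e; rewrite -e in hy.
apply: big1 => x _.
case: (boolP (odd (t + x))) => hx; last by rewrite IH // mul0r.
rewrite Kk_far ?mulr0 //; apply/eqP => e; rewrite e in hx hy.
  by move: hx hy; rewrite addnS /= ?oddD /=; case: (odd t); case: (odd x).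
by move: hx hy; rewrite !addnS /= ?oddD /=; case: (odd t); case: (odd y).
Qed.

Unset Implicit Arguments.
Local Open Scope classical_set_scope.
Local Open Scope ring_scope.


Lemma sum2 (R : realType) (g : nat -> R) a :
  \sum_(a <= i < a.+2) g i = g a + g a.+1.
Proof. by rewrite big_ltn // big_nat1. Qed.

Theorem lemma5p1 (R : realType) (delta eps : R) (p Rx : nat -> R)
  (hdelta : -1 <= delta)
  (hp : forall x : nat, (0 < x)%N ->
          p x = 2^-1 * (1 - delta / (2 * x%:R) + Rx x / 2))
  (hRx : (fun x : nat => (x%:R * Rx x : R)) @ \oo --> 0%R)
  (heps : 0 < eps)
  (hbnd : forall x : nat, (0 < x)%N ->
          eps <= p x <= 1 - eps /\ eps <= 1 - p x <= 1 - eps) :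
  forall k m : nat, ~~ odd k -> ~~ odd m -> (0 < k)%N -> (k < m)%N ->
    first_return p m <= (first_return p (m + k) + first_return p (m - k)) / 2 /\
    first_return p m <= Aavg (first_return p) (m - k) (m + k).
Proof.
move=> k m ok om k0 km.
have hpp : forall x, (0 < x)%N -> 0 < p x.
  move=> x hx; have [/andP [h1 _] _] := hbnd x hx; exact: lt_le_trans heps h1.
have hqq : forall x, (0 < x)%N -> 0 < 1 - p x.
  move=> x hx; have [_ /andP [h1 _]] := hbnd x hx; exact: lt_le_trans heps h1.
have q1 : 0 <= 1 - p 1%N by apply: ltW; apply: hqq.
pose Dc t := dd p t.+1 t 1 1.
pose f := first_return p.
have Ef : forall M, (2 <= M)%N -> f M = (1 - p 1%N) * Dc (M - 2)%N.
  move=> M hM; rewrite /f fr_dd // /Dc (dd_indep _ _ _ (L := M.+1) (L' := (M - 2).+1)) //; lia.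
have Ez : forall M, odd M -> (2 <= M)%N -> f M = 0.
  move=> M oM hM; rewrite Ef // /Dc dd_par ?mulr0 //.
  have -> : (M - 2 + 1 = M.-1)%N by lia.
  by move: oM; case: M hM => // M' _ /=.
have convD : forall N j, (j <= N)%N ->
    2 * Dc (N + N)%N <= Dc ((N + j) + (N + j))%N + Dc ((N - j) + (N - j))%N.
  move=> N j hj.
  have := dd_conv hpp hqq (L := ((N + j) + (N + j)).+2) (_ : (1 < ((N + j) + (N + j)).+2)%N) hj.
  rewrite /Dc.
  set L0 := ((N + j) + (N + j)).+2.
  rewrite (@dd_indep R p (N + N).+1 L0) ?(@dd_indep R p ((N + j) + (N + j)).+1 L0)
     ?(@dd_indep R p ((N - j) + (N - j)).+1 L0) //; rewrite /L0; lia.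
have conv : forall n j, (j < n)%N ->
    2 * f (n + n)%N <= f (n + n + (j + j))%N + f (n + n - (j + j))%N.
  move=> n j hj; rewrite !Ef; try lia.
  have e1 : (n + n - 2 = (n.-1) + (n.-1))%N by lia.
  have e2 : (n + n + (j + j) - 2 = (n.-1 + j) + (n.-1 + j))%N by lia.
  have e3 : (n + n - (j + j) - 2 = (n.-1 - j) + (n.-1 - j))%N by lia.
  rewrite e1 e2 e3 mulrCA -mulrDr; apply: ler_wpM2l => //; apply: convD; lia.
have [n hn] : exists n, m = (n + n)%N.
  by exists m./2; have := odd_double_half m; rewrite (negbTE om) add0n -addnn.
have [j hj] : exists j, k = (j + j)%N.
  by exists k./2; have := odd_double_half k; rewrite (negbTE ok) add0n -addnn.
subst m k.
have hjn : (j < n)%N by lia.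
split.
  by move: (conv n j hjn); rewrite /f => h; lra.
have T : forall j', (j' < n)%N ->
    (j' + j' + 1)%:R * f (n + n)%N <= \sum_(n + n - (j' + j') <= i < (n + n + (j' + j')).+1) f i.
  elim => [|j' IH] hj'.
    by rewrite !addn0 subn0 big_nat1 mul1r.
  have IH' := IH (ltnW hj').
  set c := (n - j'.+1)%N.
  set b := ((n + j') + (n + j'))%N.
  have ea : (n + n - (j'.+1 + j'.+1) = c + c)%N by rewrite /c; lia.
  have ea2 : (n + n - (j' + j') = (c + c).+2)%N by rewrite /c; lia.
  have eb : (n + n + (j' + j') = b)%N by rewrite /b; lia.
  have eb2 : ((n + n + (j'.+1 + j'.+1)).+1 = b.+3)%N by rewrite /b; lia.
  rewrite ea2 eb in IH'.
  have hc := conv n j'.+1 hj'.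
  have eb3 : (n + n + (j'.+1 + j'.+1) = b.+2)%N by rewrite /b; lia.
  rewrite ea eb3 in hc.
  rewrite ea eb2.
  have s1 : \sum_(c + c <= i < b.+3) f i =
      \sum_(c + c <= i < (c + c).+2) f i + \sum_((c + c).+2 <= i < b.+3) f i.
    by apply: big_cat_nat; rewrite /b /c; lia.
  have s2 : \sum_((c + c).+2 <= i < b.+3) f i =
      \sum_((c + c).+2 <= i < b.+1) f i + \sum_(b.+1 <= i < b.+3) f i.
    by apply: big_cat_nat; rewrite /b /c; lia.
  rewrite s1 s2.
  rewrite !sum2.
  have o1 : f (c + c).+1 = 0.
    by apply: Ez; [rewrite /= oddD addbb | rewrite /c; lia].
  have o2 : f b.+1 = 0.
    by apply: Ez; [rewrite /b /= oddD addbb | rewrite /b; lia].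
  rewrite o1 o2.
  have -> : (j'.+1 + j'.+1 + 1 = (j' + j' + 1) + 2)%N by lia.
  rewrite natrD mulrDl.
  move: IH' hc; set X := f (n + n)%N; set S := \sum_(_ <= i < _) f i.
  move=> h1 h2; lra.
have hT := T j hjn.
rewrite /Aavg.
have -> : (n + n + (j + j) - (n + n - (j + j)) = (j + j) + (j + j))%N by lia.
rewrite -/f.
move: hT; set S := \sum_(_ <= i < _) f i; set X := f (n + n)%N => hT.
have hj0 : 0 <= (j%:R : R) by [].
rewrite !natrD.
have hd : 0 < j%:R + j%:R + (j%:R + j%:R) + 2 :> R by lra.
rewrite mulrAC ler_pdivlMr //.
move: hT; rewrite !natrD => hT; nra.
Qed.
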